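(* Let $\Omega\subset\mathbb{R}^{n+1}$ be a compact convex body with $C^1$ boundary, and let $(\Omega_k)_{k\ge1}$ be a sequence of smooth uniformly convex bodies converging to $\Omega$ in Hausdorff distance. Then for any $\Theta\in(0,1)$ there exists $r(\Theta)>0$ depending only on $\Omega$ and $\Theta$ such that $$\max\big(\omega_\Omega(r(\Theta)),\omega_{\Omega_k}(r(\Theta))\big)<\sqrt{2-2\Theta}\qquad\text{for all }k\in\mathbb{N}.$$
   Context: For a convex body $D$ with $C^1$ boundary and outward unit normal map $\mathcal{N}_D$, $\omega_D(r):=\sup\{|\mathcal{N}_D(X_1)-\mathcal{N}_D(X_2)|:X_1,X_2\in\partial D,\ |X_1-X_2|<r\}$. A convex set $D$ is uniformly convex if there is $R>0$ with $D\subset B^{n+1}_R(X-R\nu)$ for every $X\in\partial D$ and every outward unit normal $\nu$ at $X$. Hausdorff distance: $d_H(A,B)=\max(\sup_{a\in A}\mathrm{dist}(a,B),\sup_{b\in B}\mathrm{dist}(b,A))$. *)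

(* Defs.v *)
(* R^{n+1} is modelled as 'rV[R]_(n.+1) with the
   Euclidean inner product/norm defined below; topological notions (open,
   compact, interior, closure, continuity) are the library's, for the product
   topology on 'rV, which coincides with the Euclidean topology. *)
From HB Require Import structures.
From mathcomp Require Import all_boot all_order all_algebra.
From mathcomp Require Import all_classical all_reals all_analysis.
Set Implicit Arguments. Unset Strict Implicit. Unset Printing Implicit Defensive.
Import Order.TTheory GRing.Theory Num.Theory.
Import numFieldNormedType.Exports.
Local Open Scope classical_set_scope.
Local Open Scope ring_scope.

Section Defs.
Variables (R : realType) (n : nat).
Local Notation V := 'rV[R]_n.+1.

Definition edot (u v : V) : R := \sum_(i < n.+1) u ord0 i * v ord0 i.
Definition enorm (u : V) : R := Num.sqrt (edot u u).

Definition bdry (D : set V) : set V := closure D `\` interior D.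

Definition convex_set (D : set V) : Prop :=
  forall x y t, D x -> D y -> 0 <= t -> t <= 1 -> D (t *: x + (1 - t) *: y).

Definition convex_body (D : set V) : Prop :=
  compact D /\ convex_set D /\ interior D !=set0.

Definition outward_unit_normal (D : set V) (X nu : V) : Prop :=
  enorm nu = 1 /\ forall Y, D Y -> edot nu (Y - X) <= 0.

Definition C1_on (U : set V) (F : V -> R) : Prop :=
  {within U, continuous F} /\
  forall v : V, (forall y, U y -> derivable F y v) /\
                {within U, continuous (fun y => 'D_v F y)}.

Fixpoint iterD (vs : seq V) (F : V -> R) : V -> R :=
  if vs is v :: vs' then (fun y => 'D_v (iterD vs' F) y) else F.

Definition Cinf_on (U : set V) (F : V -> R) : Prop :=
  forall (vs : seq V) (v : V),
    (forall y, U y -> derivable (iterD vs F) y v) /\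
    {within U, continuous (iterD vs F)}.

Definition boundary_of_class (P : set V -> (V -> R) -> Prop) (D : set V) : Prop :=
  forall X, bdry D X ->
    exists (U : set V) (F : V -> R),
      [/\ open U, U X, P U F, (exists v : V, 'D_v F X != 0) &
          D `&` U = [set y | U y /\ F y <= 0]].

Definition C1_boundary (D : set V) := boundary_of_class C1_on D.
Definition smooth_boundary (D : set V) := boundary_of_class Cinf_on D.

Definition omega (D : set V) (r : R) : R :=
  sup [set d | exists X1 X2 nu1 nu2,
        [/\ bdry D X1 /\ bdry D X2, enorm (X1 - X2) < r,
            outward_unit_normal D X1 nu1, outward_unit_normal D X2 nu2 &
            d = enorm (nu1 - nu2)]].

Definition uniformly_convex (D : set V) : Prop :=
  convex_set D /\
  exists Rad : R, 0 < Rad /\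
    forall X nu, bdry D X -> outward_unit_normal D X nu ->
      forall Y, D Y -> enorm (Y - (X - Rad *: nu)) <= Rad.

Definition edist_set (a : V) (B : set V) : R := inf [set enorm (a - b) | b in B].

Definition hausdorff_dist (A B : set V) : R :=
  Num.max (sup [set edist_set a B | a in A]) (sup [set edist_set b A | b in B]).

End Defs.

(* Main.v *)
Require Import Defs.
From HB Require Import structures.
From mathcomp Require Import all_boot all_order all_algebra.
From mathcomp Require Import all_classical all_reals all_analysis.
Import Order.TTheory GRing.Theory Num.Theory.
Import numFieldNormedType.Exports.
Local Open Scope classical_set_scope.
Local Open Scope ring_scope.
From mathcomp Require Import ring lra.
Set Implicit Arguments. Unset Strict Implicit. Unset Printing Implicit Defensive.


Section Basics.
Variables (R : realType) (n : nat).
Local Notation V := 'rV[R]_n.+1.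
Local Notation edot := (@edot R n).
Local Notation enorm := (@enorm R n).

Lemma edotC (u v : V) : edot u v = edot v u.
Proof. by apply: eq_bigr => i _; rewrite mulrC. Qed.

Lemma edotDr (u v w : V) : edot u (v + w) = edot u v + edot u w.
Proof. by rewrite /edot -big_split; apply: eq_bigr => i _; rewrite !mxE mulrDr. Qed.

Lemma edotZr (u v : V) (c : R) : edot u (c *: v) = c * edot u v.
Proof. by rewrite /edot mulr_sumr; apply: eq_bigr => i _; rewrite !mxE mulrCA. Qed.

Lemma edotNr (u v : V) : edot u (- v) = - edot u v.
Proof. by rewrite -scaleN1r edotZr mulN1r. Qed.

Lemma edotBr (u v w : V) : edot u (v - w) = edot u v - edot u w.
Proof. by rewrite edotDr edotNr. Qed.

Lemma edotDl (u v w : V) : edot (v + w) u = edot v u + edot w u.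
Proof. by rewrite edotC edotDr !(edotC u). Qed.
Lemma edotZl (u v : V) (c : R) : edot (c *: v) u = c * edot v u.
Proof. by rewrite edotC edotZr edotC. Qed.
Lemma edotNl (u v : V) : edot (- v) u = - edot v u.
Proof. by rewrite edotC edotNr edotC. Qed.
Lemma edotBl (u v w : V) : edot (v - w) u = edot v u - edot w u.
Proof. by rewrite edotDl edotNl. Qed.

Lemma edot0r (u : V) : edot u 0 = 0.
Proof. by rewrite /edot big1 // => i _; rewrite mxE mulr0. Qed.

Lemma edotxx_ge0 (u : V) : 0 <= edot u u.
Proof. by apply: sumr_ge0 => i _; rewrite -expr2 sqr_ge0. Qed.

Lemma edotxx0 (u : V) : edot u u = 0 -> u = 0.
Proof.
move=> h; apply/rowP => i; rewrite mxE.
have := @psumr_eq0P _ _ xpredT (fun i => u ord0 i * u ord0 i).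
move=> /(_ (fun i _ => ltac:(by rewrite -expr2 sqr_ge0)) h i isT).
by move/eqP; rewrite mulf_eq0 orbb => /eqP.
Qed.

Lemma enorm_ge0 (u : V) : 0 <= enorm u.
Proof. exact: sqrtr_ge0. Qed.

Lemma enorm_sq (u : V) : enorm u ^+ 2 = edot u u.
Proof. by rewrite sqr_sqrtr // edotxx_ge0. Qed.

Lemma CS (u v : V) : edot u v ^+ 2 <= edot u u * edot v v.
Proof.
have [v0|vpos] := eqVneq (edot v v) 0.
  by rewrite (@edotxx0 v v0) !edot0r expr0n /= mulr0.
have vp : 0 < edot v v by rewrite lt_neqAle eq_sym vpos edotxx_ge0.
set t := edot u v / edot v v.
have := edotxx_ge0 (u - t *: v).
rewrite !edotBl !edotBr !edotZl !edotZr (edotC v u) /t.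
move=> h.
have : 0 <= edot u u * edot v v - edot u v ^+ 2.
  have e : edot u u - edot u v / edot v v * edot u v -
     (edot u v / edot v v * edot u v - edot u v / edot v v * (edot u v / edot v v * edot v v))
     = (edot u u * edot v v - edot u v ^+ 2) / edot v v.
    by field; rewrite vpos.
  by move: h; rewrite e pmulr_lge0 // invr_gt0.
by rewrite subr_ge0.
Qed.

Lemma CS_abs (u v : V) : `|edot u v| <= enorm u * enorm v.
Proof.
rewrite -(ler_pXn2r (_ : 0 < 2)%N) ?nnegrE ?mulr_ge0 ?enorm_ge0 //.
by rewrite exprMn !enorm_sq real_normK ?num_real // CS.
Qed.

Lemma CS_le (u v : V) : edot u v <= enorm u * enorm v.
Proof. exact: le_trans (ler_norm _) (CS_abs _ _). Qed.

Lemma enormD (u v : V) : enorm (u + v) <= enorm u + enorm v.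
Proof.
rewrite -(ler_pXn2r (_ : 0 < 2)%N) ?nnegrE ?addr_ge0 ?enorm_ge0 //.
rewrite enorm_sq edotDl !edotDr sqrrD !enorm_sq (edotC v u).
have := CS_le u v; lra.
Qed.

Lemma enormN (u : V) : enorm (- u) = enorm u.
Proof. by rewrite /enorm edotNl edotNr opprK. Qed.

Lemma enormB (u v : V) : enorm (u - v) = enorm (v - u).
Proof. by rewrite -enormN opprB. Qed.

Lemma enormZ (c : R) (u : V) : enorm (c *: u) = `|c| * enorm u.
Proof. by rewrite /enorm edotZl edotZr mulrA sqrtrM ?sqr_ge0 // -expr2 sqrtr_sqr. Qed.

Lemma unit_dot (nu u : V) : enorm nu = 1 -> edot nu u <= enorm u.
Proof. by move=> h; have := CS_le nu u; rewrite h mul1r. Qed.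

Lemma coord_le (u : V) i : `|u ord0 i| <= enorm u.
Proof.
rewrite -(ler_pXn2r (_ : 0 < 2)%N) ?nnegrE ?enorm_ge0 // enorm_sq real_normK ?num_real //.
rewrite /edot (bigD1 i) //= expr2 lerDl; apply: sumr_ge0 => j _; by rewrite -expr2 sqr_ge0.
Qed.

Lemma enorm_le_sum (u : V) : enorm u <= \sum_i `|u ord0 i|.
Proof.
rewrite -(ler_pXn2r (_ : 0 < 2)%N) ?nnegrE ?enorm_ge0 ?sumr_ge0 // enorm_sq.
rewrite /edot.
pose P (x y : R) := 0 <= y /\ x <= y ^+ 2.
suff [] : P (\sum_i u ord0 i * u ord0 i) (\sum_i `|u ord0 i|) by [].
apply: (big_ind2 P).
- by split => //; rewrite expr0n.
- move=> x1 x2 y1 y2 [h1 h2] [h3 h4]; split; first exact: addr_ge0.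
  rewrite sqrrD; nra.
- move=> i; split => //; by rewrite -expr2 real_normK ?num_real.
Qed.


Lemma norm_le_enorm (u : V) : `|u| <= enorm u.
Proof.
rewrite (_ : `|u| = mx_norm u) // mx_normrE; apply: bigmax_le; first exact: enorm_ge0.
by move=> [i j] _ /=; rewrite (ord1 i); exact: coord_le.
Qed.

Lemma coord_le_norm (u : V) i : `|u ord0 i| <= `|u|.
Proof.
rewrite (_ : `|u| = mx_norm u) // mx_normrE.
exact: (le_bigmax _ (fun ij : 'I_1 * 'I_n.+1 => `|u ij.1 ij.2|) (ord0, i)).
Qed.

Lemma enorm_le_norm (u : V) : enorm u <= n.+1%:R * `|u|.
Proof.
apply: (le_trans (enorm_le_sum u)).
have -> : n.+1%:R * `|u| = \sum_(i < n.+1) `|u| by rewrite sumr_const card_ord mulr_natl.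
by apply: ler_sum => i _; exact: coord_le_norm.
Qed.

End Basics.

Section Deriv.
Variables (R : realType) (n : nat).
Local Notation V := 'rV[R]_n.+1.

Lemma line_is_derive (F : V -> R) (y w : V) (t : R) :
  derivable F (y + t *: w) w ->
  is_derive t 1 (fun s : R => F (y + s *: w)) ('D_w F (y + t *: w)).
Proof.
move=> dF.
have E : (fun h : R => h^-1 *: (((fun s : R => F (y + s *: w)) \o shift t) (h *: 1) - F (y + t *: w)))
   = (fun h : R => h^-1 *: ((F \o shift (y + t *: w)) (h *: w) - F (y + t *: w))).
  apply/funext => h /=; congr (_ *: (F _ - _)).
  rewrite /shift /= scalerDl [h%:A]mulr1 addrCA; done.
apply: DeriveDef; first by rewrite /derivable E.
by rewrite /derive E.
Qed.
End Deriv.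

Section Deriv2.
Variables (R : realType) (n : nat).
Local Notation V := 'rV[R]_n.+1.

Lemma dnbhs_to_right (f : R -> R) (l : R) : f @ (0:R)^' --> l -> f @ (0:R)^'+ --> l.
Proof.
move=> h; apply: cvg_trans h; apply: cvg_app.
move=> A [e egt0 Ae]; exists e => // x xe xgt0; apply: Ae => //.
exact/lt0r_neq0.
Qed.

Lemma derive_add (F : V -> R) (U : set V) (x v w : V) :
  open U -> U x ->
  (forall y, U y -> derivable F y w) ->
  derivable F x v -> derivable F x (v + w) ->
  {for x, continuous (fun y => 'D_w F y)} ->
  'D_(v + w) F x = 'D_v F x + 'D_w F x.
Proof.
move=> oU Ux dw dv dvw cw.
pose q := fun h : R => h^-1 *: ((F \o shift x) (h *: (v + w)) - F x).
have -> : 'D_(v + w) F x = lim (q @ 0^'+) by rewrite /derive -cvg_at_rightE.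
apply: cvg_lim; last first.
pose q2 := fun h : R => h^-1 *: ((F \o shift x) (h *: v) - F x).
pose q1 := fun h : R => h^-1 * (F (h *: (v + w) + x) - F (h *: v + x)).
have q2c : q2 @ 0^'+ --> 'D_v F x by apply: dnbhs_to_right; exact: dv.
have q1c : q1 @ 0^'+ --> 'D_w F x.
  apply/cvgrPdist_le => e e0.
  have Un : nbhs x U by exact: open_nbhs_nbhs.
  have : nbhs x (U `&` [set y | `|'D_w F x - 'D_w F y| <= e]).
    apply: filterI => //.
    by move/cvgrPdist_le: cw => /(_ e e0).
  move=> /nbhs_ballP [r /= r0 Hr].
  have vw0 : 0 < `|v| + `|w| + 1 by rewrite ltr_wpDl ?addr_ge0.
  near=> h.
  have hpos : 0 < h by near: h; exact: nbhs_right_gt.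
  have hsmall : h < r / (`|v| + `|w| + 1).
    by near: h; apply: nbhs_right_lt; rewrite divr_gt0.
  have inball : forall t, 0 <= t <= h -> ball x r (x + h *: v + t *: w).
    move=> t /andP[t0 th]; rewrite -ball_normE /= -addrA opprD addrA subrr add0r normrN.
    apply: (le_lt_trans (ler_normD _ _)); rewrite !normrZ !ger0_norm ?(ltW hpos) //.
    apply: (le_lt_trans (y := h * (`|v| + `|w| + 1))).
      rewrite !mulrDr mulr1; have := normr_ge0 w; have := normr_ge0 v.
      have : t * `|w| <= h * `|w| by rewrite ler_wpM2r.
      lra.
    by rewrite -ltr_pdivlMr.
  pose phi := fun t : R => F ((x + h *: v) + t *: w).
  pose df := fun t : R => 'D_w F ((x + h *: v) + t *: w).
  have dphi : forall t, t \in `]0, h[ -> is_derive t 1 phi (df t).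
    move=> t; rewrite in_itv /= => /andP[t0 th].
    apply: line_is_derive; apply: dw; apply: (Hr _ (inball t _)).1.
    by rewrite ltW ?ltW.
  have cphi : {within `[0, h], continuous phi}.
    apply: derivable_within_continuous => t; rewrite in_itv /= => tI.
    by have [] := @line_is_derive _ _ F _ _ _ (dw _ (Hr _ (inball t tI)).1).
  have [c cI E] := MVT_segment (ltW hpos) dphi cphi.
  have -> : q1 h = df c.
    rewrite /q1 (_ : h *: (v + w) + x = x + h *: v + h *: w); last first.
      by rewrite scalerDr addrC addrA.
    rewrite (_ : F (h *: v + x) = phi 0); last by rewrite /phi scale0r addr0 addrC.
    rewrite (_ : F (x + h *: v + h *: w) = phi h) // E subr0 mulrCA mulVf ?mulr1 //.
  move: cI; rewrite in_itv /= => cI.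
  exact: (Hr _ (inball c cI)).2.
have E : q2 + q1 = q.
  apply/funext => h; rewrite /q /q2 /q1 /= /shift /=.
  change (h^-1 * (F (h *: v + x) - F x) + h^-1 * (F (h *: (v + w) + x) - F (h *: v + x)) = h^-1 * (F (h *: (v + w) + x) - F x)).
  rewrite -mulrDr; congr (_ * _); ring.
have H := cvgD q2c q1c. rewrite E in H. apply: H.
Unshelve. all: by end_near.
Qed.
End Deriv2.

Section Deriv3.
Variables (R : realType) (n : nat).
Local Notation V := 'rV[R]_n.+1.

Lemma derive_scal (F : V -> R) (x v : V) (c : R) :
  derivable F x v -> 'D_(c *: v) F x = c * 'D_v F x.
Proof.
move=> dv.
have [->|c0] := eqVneq c 0; first by rewrite scale0r derive0 mul0r.
have sc : (fun h : R => c * h) @ (0:R)^' --> (0:R)^'.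
  move=> A [e e0 Ae]; exists (e / `|c|) => [|y ye y0]; first by rewrite /= divr_gt0 // normr_gt0.
  apply: Ae; last by rewrite mulf_neq0.
  move: ye; rewrite /= !sub0r !normrN normrM ltr_pdivlMr ?normr_gt0 // mulrC //.
have H := cvg_comp _ _ sc dv.
have H2 := cvgMl_tmp (a := c) H.
rewrite /derive; apply: cvg_lim => //.
have E : (fun h : R => h^-1 *: ((F \o shift x) (h *: (c *: v)) - F x)) =
  (fun h => c * (((fun h : R => h^-1 *: ((F \o shift x) (h *: v) - F x)) \o ( *%R c)) h)).
  apply/funext => h /=; rewrite scalerA [h * c]mulrC.
  rewrite -![_^-1 *: _]/(_^-1 * _) invfM !mulrA mulfV ?mul1r //.
by rewrite E; apply: H2.
Qed.
End Deriv3.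

Section Deriv4.
Variables (R : realType) (n : nat).
Local Notation V := 'rV[R]_n.+1.

Lemma derive_linear (F : V -> R) (U : set V) (x : V) :
  open U -> U x -> (forall v y, U y -> derivable F y v) ->
  (forall v, {for x, continuous (fun y => 'D_v F y)}) ->
  forall v, 'D_v F x = edot (\row_j 'D_(delta_mx 0 j) F x) v.
Proof.
move=> oU Ux dF cF v.
rewrite {1}(row_sum_delta v).
rewrite (@big_morph _ _ (fun v => 'D_v F x) 0 +%R); first last.
- exact: derive0.
- by move=> a b; apply: (@derive_add _ _ F U x a b oU Ux) => //; [move=> y; exact: dF|exact: dF|exact: dF].
rewrite /edot; apply: eq_bigr => j _.
by rewrite derive_scal ?mxE ?[_ * v _ _]mulrC //; exact: dF.
Qed.
End Deriv4.

Section Local.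
Variables (R : realType) (n : nat).
Local Notation V := 'rV[R]_n.+1.
Local Notation edot := (@edot R n).
Local Notation enorm := (@enorm R n).

Lemma dir_in (A U : set V) (F : V -> R) (X0 v : V) :
  open U -> U X0 -> A `&` U = [set y | U y /\ F y <= 0] -> A X0 ->
  derivable F X0 v -> 'D_v F X0 < 0 ->
  \forall s \near (0:R)^'+, A (X0 + s *: v).
Proof.
move=> oU UX0 AU AX0 dv neg.
have FX0 : F X0 <= 0.
  by have : (A `&` U) X0 by []; rewrite AU => -[].
have Un : nbhs X0 U by exact: open_nbhs_nbhs.
move: Un => /nbhs_ballP [r /= r0 Hr].
have q2c := @dnbhs_to_right R _ _ dv.
move/cvgrPdist_le: q2c => /(_ (- ('D_v F X0) / 2)).
have e0 : 0 < - 'D_v F X0 / 2 by rewrite divr_gt0 // oppr_gt0.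
move=> /(_ e0) qn.
have v0 : 0 < `|v| + 1 by rewrite ltr_wpDl.
near=> s.
have spos : 0 < s by near: s; exact: nbhs_right_gt.
have ssmall : s < r / (`|v| + 1).
  by near: s; apply: nbhs_right_lt; rewrite divr_gt0.
have qs : `|'D_v F X0 - s^-1 *: ((F \o shift X0) (s *: v) - F X0)| <= - 'D_v F X0 / 2.
  by near: s; exact: qn.
have Uy : U (X0 + s *: v).
  apply: Hr; rewrite -ball_normE /= opprD addrA subrr sub0r normrN normrZ ger0_norm ?ltW //.
  apply: (le_lt_trans (y := s * (`|v| + 1))); first by apply: ler_wpM2l; [exact: ltW | rewrite lerDl].
  by rewrite -ltr_pdivlMr.
have Fy : F (X0 + s *: v) <= 0.
  move: qs; rewrite /= /shift /= -[s^-1 *: _]/(s^-1 * _) [s *: v + X0]addrC.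
  set d := F (X0 + s *: v) - F X0 => qs.
  have : s^-1 * d < 0.
    have := ler_norm (s^-1 * d - 'D_v F X0); rewrite distrC; lra.
  rewrite pmulr_rlt0 ?invr_gt0 // /d; lra.
have : [set y | U y /\ F y <= 0] (X0 + s *: v) by [].
by rewrite -AU => -[].
Unshelve. all: by end_near.
Qed.


Lemma abs_key (D e : R) : 0 <= e -> forall a1 a2 : R, 1 - D <= `|a1| -> `|a1| <= 1 + D ->
    1 - D <= `|a2| -> `|a2| <= 1 + D -> - e <= a1 -> - e <= a2 ->
    `|a1 - a2| <= 2 * D + 2 * e.
Proof.
  move=> e0 a1 a2.
  case: (lerP 0 a1) => [p1|p1]; [rewrite (ger0_norm p1)|rewrite (ltr0_norm p1)].
  all: case: (lerP 0 a2) => [p2|p2]; [rewrite (ger0_norm p2)|rewrite (ltr0_norm p2)].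
  all: case: (lerP 0 (a1 - a2)) => [p3|p3]; [rewrite (ger0_norm p3)|rewrite (ltr0_norm p3)].
  all: lra.
Qed.

Lemma two_normals_close (g nu1 nu2 : V) (l1 l2 D eta : R) :
  enorm nu1 = 1 -> enorm nu2 = 1 ->
  enorm (nu1 - l1 *: g) <= D -> enorm (nu2 - l2 *: g) <= D ->
  - eta <= l1 -> - eta <= l2 -> 0 <= eta ->
  enorm (nu1 - nu2) <= 4 * D + 2 * eta * enorm g.
Proof.
move=> n1 n2 h1 h2 e1 e2 e0.
have N0 := enorm_ge0 g.
have E : nu1 - nu2 = (nu1 - l1 *: g) - (nu2 - l2 *: g) + (l1 - l2) *: g.
  by apply/rowP => j; rewrite !mxE; ring.
have b1 : forall (nu : V) l, enorm nu = 1 -> enorm (nu - l *: g) <= D ->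
    1 - D <= `|l| * enorm g <= 1 + D.
  move=> nu l hn hl; rewrite -enormZ; apply/andP; split.
    have := enormD (nu - l *: g) (l *: g); rewrite subrK hn; lra.
  have := enormD nu (- (nu - l *: g)); rewrite enormN opprB addrC subrK hn; lra.
have /andP[b11 b12] := b1 _ _ n1 h1.
have /andP[b21 b22] := b1 _ _ n2 h2.
rewrite E.
apply: (le_trans (enormD _ _)).
have := enormD (nu1 - l1 *: g) (- (nu2 - l2 *: g)); rewrite enormN => h3.
rewrite enormZ.
suff : `|l1 - l2| * enorm g <= 2 * D + 2 * eta * enorm g by lra.
set N := enorm g.
have key := @abs_key D (eta * N) (mulr_ge0 e0 N0).
have nm : forall l : R, `|l| * N = `|l * N| by move=> l; rewrite normrM (ger0_norm N0).
rewrite nm mulrBl -mulrA; apply: key; rewrite -?nm // -mulNr; exact: ler_wpM2r.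
Qed.

Lemma enorm_coord_bound (w : V) (d : R) :
  (forall j, `|w ord0 j| <= d) -> enorm w <= n.+1%:R * d.
Proof.
move=> h; apply: (le_trans (enorm_le_sum w)).
have -> : n.+1%:R * d = \sum_(i < n.+1) d by rewrite sumr_const card_ord mulr_natl.
by apply: ler_sum => i _; exact: h.
Qed.

Definition approx_normal (A : set V) (X : V) (tau : R) (nu : V) : Prop :=
  enorm nu = 1 /\ forall Z, A Z -> edot nu (Z - X) <= tau.

Lemma approx_dir A X tau nu v s : approx_normal A X tau nu -> 0 < s ->
  A (X + s *: v) -> edot nu v <= tau / s.
Proof.
move=> [_ h] s0 /h; rewrite addrAC subrr add0r edotZr.
by rewrite ler_pdivlMr // mulrC.
Qed.

Lemma edot_delta (w : V) j : edot w (delta_mx 0 j) = w ord0 j.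
Proof.
rewrite /edot (bigD1 j) //= big1 ?addr0; first by rewrite mxE !eqxx mulr1.
by move=> i /negbTE ij; rewrite mxE ij andbF mulr0.
Qed.

Lemma edot0l (w : V) : edot 0 w = 0.
Proof. by rewrite edotC edot0r. Qed.

Lemma local_bdry (A U : set V) (F : V -> R) (X0 : V) :
  open U -> U X0 -> C1_on U F -> (exists v, 'D_v F X0 != 0) ->
  A `&` U = [set y | U y /\ F y <= 0] -> A X0 ->
  forall eps, 0 < eps -> exists2 tau, 0 < tau & forall nu1 nu2,
    approx_normal A X0 tau nu1 -> approx_normal A X0 tau nu2 -> enorm (nu1 - nu2) <= eps.
Proof.
move=> oU UX0 [Fc Dc] [v0 nz] AU AX0 eps eps0.
have dF : forall v y, U y -> derivable F y v := fun v => (Dc v).1.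
have cD : forall v, {for X0, continuous (fun y => 'D_v F y)}.
  move=> v; have := (Dc v).2; rewrite continuous_open_subspace //.
  by move/(_ X0); apply; exact: mem_set.
set g : V := \row_j 'D_(delta_mx 0 j) F X0.
have Lg : forall v, 'D_v F X0 = edot g v := derive_linear oU UX0 dF cD.
clearbody g.
set G := edot g g.
set N := enorm g.
have g0 : g != 0.
  by apply: contraNneq nz => g0; rewrite Lg g0 edot0l.
have Gpos : 0 < G.
  rewrite lt_neqAle edotxx_ge0 andbT eq_sym; apply: contraNneq g0 => G0.
  by apply/eqP; apply: edotxx0.
have Npos : 0 < N by rewrite /N /enorm sqrtr_gt0.
set m : R := n.+1%:R.
have m0 : 0 < m by rewrite /m ltr0n.
pose c := eps / (16 * m * N).
have c0 : 0 < c by rewrite /c divr_gt0 // !mulr_gt0.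
pose u j := delta_mx 0 j - (g ord0 j / G) *: g.
pose dir (jb : 'I_n.+1 * bool) := (if jb.2 then u jb.1 else - u jb.1) - c *: g.
have gu : forall j, edot g (u j) = 0.
  move=> j; rewrite edotBr edot_delta edotZr -/G; field; exact: lt0r_neq0.
have gdir : forall jb, 'D_(dir jb) F X0 < 0.
  move=> [j b]; rewrite Lg /dir edotBr edotZr -/G.
  case: b => /=; rewrite ?edotNr gu ?oppr0 sub0r oppr_lt0 mulr_gt0 //.
have Hnear : \forall s \near (0:R)^'+,
    (forall jb, A (X0 + s *: dir jb)) /\ A (X0 + s *: (- g)) /\ 0 < s.
  near=> s; split; [|split].
  - near: s; apply: filter_forall => jb.
    exact: (dir_in oU UX0 AU AX0 (dF _ _ UX0) (gdir jb)).
  - near: s; apply: (dir_in oU UX0 AU AX0 (dF _ _ UX0)).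
    by rewrite Lg edotNr oppr_lt0.
  - by near: s; exact: nbhs_right_gt.
have [s [Hs1 [Hs2 spos]]] := @filter_ex R (0:R)^'+ _ _ Hnear.
pose K := 16 * m + 8 * N / G + 1.
have K0 : 0 < K.
  have : 0 <= 8 * N / G by rewrite divr_ge0 ?mulr_ge0 // ltW.
  rewrite /K; lra.
pose tau := s * eps / K.
have tau0 : 0 < tau by rewrite /tau !divr_gt0 // mulr_gt0.
exists tau => // nu1 nu2 an1 an2.
have key : forall nu, approx_normal A X0 tau nu ->
    enorm (nu - (edot nu g / G) *: g) <= m * (tau / s + c * N) /\
    - (tau / (s * G)) <= edot nu g / G.
  move=> nu an; have cs : `|edot nu g| <= N.
    by have := CS_abs nu g; rewrite an.1 mul1r.
  split.
  - apply: enorm_coord_bound => j.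
    have h1 := approx_dir an spos (Hs1 (j, true)).
    have h2 := approx_dir an spos (Hs1 (j, false)).
    rewrite /dir /= edotBr edotZr in h1.
    rewrite /dir /= edotBr edotNr edotZr in h2.
    have eu : edot nu (u j) = nu ord0 j - (g ord0 j / G) * edot nu g.
      by rewrite edotBr edot_delta edotZr.
    rewrite eu in h1 h2.
    have [cs1 cs2] : - (c * N) <= c * edot nu g /\ c * edot nu g <= c * N.
      move: cs; rewrite ler_norml => /andP[a b]; split.
        by rewrite -mulrN ler_wpM2l // ltW.
      by rewrite ler_wpM2l // ltW.
    have E2 : edot nu g / G * g ord0 j = g ord0 j / G * edot nu g by field; exact: lt0r_neq0.
    rewrite !mxE ler_norml E2; apply/andP; split; lra.
  - have h3 := approx_dir an spos Hs2.
    rewrite edotNr in h3.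
    rewrite invfM mulrA ler_pdivlMr // mulNr divfK ?lt0r_neq0 //; lra.
have [k11 k12] := key _ an1.
have [k21 k22] := key _ an2.
have eta0 : 0 <= tau / (s * G) by apply: divr_ge0; [exact: ltW | apply: mulr_ge0; exact: ltW].
apply: (le_trans (two_normals_close an1.1 an2.1 k11 k21 k12 k22 eta0)).
rewrite -/N.
have ts : tau / s = eps / K by rewrite /tau; field; rewrite ?lt0r_neq0.
have cN : c * N = eps / (16 * m) by rewrite /c; field; rewrite ?lt0r_neq0.
have eN : tau / (s * G) * N = (eps / K) * (N / G).
  by rewrite /tau; field; rewrite ?lt0r_neq0.
have NG0 : 0 <= N / G by rewrite divr_ge0 // ltW.
have KE : K = 16 * m + 8 * (N / G) + 1 by rewrite /K mulrA.
have i1 : m * (eps / K) <= eps / 16.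
  rewrite -(ler_pM2r K0) -mulrA divfK ?lt0r_neq0 // KE; nra.
have i2 : (eps / K) * (N / G) <= eps / 8.
  rewrite -(ler_pM2r K0) mulrAC divfK ?lt0r_neq0 // KE; nra.
have i3 : m * (eps / (16 * m)) = eps / 16 by field; rewrite lt0r_neq0.
rewrite mulrDr ts cN i3 -mulrA eN; lra.
Unshelve. all: by end_near.
Qed.

Lemma local_all (A : set V) : C1_boundary A -> forall X0, A X0 ->
  forall eps, 0 < eps -> exists2 tau, 0 < tau & forall nu1 nu2,
    approx_normal A X0 tau nu1 -> approx_normal A X0 tau nu2 -> enorm (nu1 - nu2) <= eps.
Proof.
move=> C1 X0 AX0 eps eps0.
have [int|nint] := pselect (interior A X0).
  move: int; rewrite /interior => /nbhs_ballP [r /= r0 Hr].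
  exists (r / 4); first by rewrite divr_gt0.
  move=> nu1 nu2 [n1 h1] _; exfalso.
  have : A (X0 + (r / 2) *: nu1).
    apply: Hr; rewrite -ball_normE /= opprD addrA subrr sub0r normrN normrZ.
    rewrite ger0_norm ?divr_ge0 ?ltW //.
    have := norm_le_enorm nu1; rewrite n1 => hn.
    have : r / 2 * `|nu1| <= r / 2 by rewrite -[X in _ <= X]mulr1 ler_wpM2l // divr_ge0 // ltW.
    lra.
  move=> /h1; rewrite addrAC subrr add0r edotZr.
  have -> : edot nu1 nu1 = 1 by rewrite -enorm_sq n1 expr1n.
  lra.
have bd : bdry A X0 by split => //; exact: subset_closure.
have [U [F [oU UX0 C1F nz AU]]] := C1 X0 bd.
exact: (local_bdry oU UX0 C1F nz AU AX0).
Qed.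

Lemma uniform_normals (A : set V) : compact A -> C1_boundary A ->
  forall eps, 0 < eps -> exists2 d, 0 < d & forall X, A X -> forall nu1 nu2,
    approx_normal A X d nu1 -> approx_normal A X d nu2 -> enorm (nu1 - nu2) <= eps.
Proof.
move=> cA C1 eps eps0.
pose P := fun (d : R) (X : V) => forall nu1 nu2,
  approx_normal A X d nu1 -> approx_normal A X d nu2 -> enorm (nu1 - nu2) <= eps.
have cover : forall x, A x -> \forall x' \near x & i \near (0:R)^'+, P i x'.
  move=> x Ax.
  have [tau tau0 Ht] := local_all C1 Ax eps0.
  have m0 : 0 < n.+1%:R :> R by rewrite ltr0n.
  have nx : \forall x' \near x, enorm (x' - x) <= tau / 2.
    apply/nbhs_ballP; exists (tau / 2 / n.+1%:R) => /=; first by rewrite !divr_gt0.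
    move=> y; rewrite -ball_normE /= => hy.
    apply: (le_trans (enorm_le_norm _)).
    rewrite -opprB normrN -ler_pdivlMl // mulrC; exact: ltW.
  near=> x' i.
  have ipos : 0 < i by near: i; exact: nbhs_right_gt.
  have ismall : i < tau / 2 by near: i; apply: nbhs_right_lt; rewrite divr_gt0.
  have hx : enorm (x' - x) <= tau / 2 by near: x'; exact: nx.
  move=> nu1 nu2 [n1 a1] [n2 a2]; apply: Ht.
  - split => // Z AZ; rewrite (_ : Z - x = (Z - x') + (x' - x)); last by rewrite addrA subrK.
    rewrite edotDr; have /= := a1 Z AZ; have := unit_dot (x' - x) n1; lra.
  - split => // Z AZ; rewrite (_ : Z - x = (Z - x') + (x' - x)); last by rewrite addrA subrK.
    rewrite edotDr; have /= := a2 Z AZ; have := unit_dot (x' - x) n2; lra.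
have H := (compact_near_coveringP A).1 cA R (0:R)^'+ P _ cover.
have H2 : \forall d \near (0:R)^'+, 0 < d /\ A `<=` P d.
  near=> d; split; first by near: d; exact: nbhs_right_gt.
  by near: d; exact: H.
have [d [d0 Hd]] := @filter_ex R (0:R)^'+ _ _ H2.
by exists d => // X AX; exact: Hd.
Unshelve. all: by end_near.
Qed.

End Local.

Section Final.
Variables (R : realType) (n : nat).
Local Notation V := 'rV[R]_n.+1.
Local Notation edot := (@edot R n).
Local Notation enorm := (@enorm R n).

Lemma transfer (A D : set V) (rho r d eps : R) :
  (forall X, A X -> forall nu1 nu2, approx_normal A X d nu1 ->
     approx_normal A X d nu2 -> enorm (nu1 - nu2) <= eps) ->
  (forall Z, A Z -> exists2 W, D W & enorm (Z - W) <= rho) ->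
  (forall Y, D Y -> exists2 Z, A Z & enorm (Y - Z) <= rho) ->
  0 <= rho -> 0 <= r -> 3 * rho + r <= d ->
  forall Y1 Y2 nu1 nu2, D Y1 -> D Y2 -> enorm (Y1 - Y2) <= r ->
  outward_unit_normal D Y1 nu1 -> outward_unit_normal D Y2 nu2 ->
  enorm (nu1 - nu2) <= eps.
Proof.
move=> HA AD DA rho0 r0 hd Y1 Y2 nu1 nu2 DY1 DY2 hY [n1 o1] [n2 o2].
have [Z0 AZ0 hZ0] := DA _ DY1.
apply: (HA Z0 AZ0).
- split => // Z AZ; have [W DW hW] := AD _ AZ.
  have -> : Z - Z0 = (Z - W) + (W - Y1) + (Y1 - Z0).
    by rewrite !addrA subrK subrK.
  rewrite (edotDr nu1 (Z - W + (W - Y1))) (edotDr nu1 (Z - W)).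
  have := o1 _ DW; have := unit_dot (Z - W) n1.
  have := unit_dot (Y1 - Z0) n1; lra.
- split => // Z AZ; have [W DW hW] := AD _ AZ.
  have -> : Z - Z0 = (Z - W) + (W - Y2) + ((Y2 - Y1) + (Y1 - Z0)).
    by rewrite !addrA subrK subrK subrK.
  rewrite (edotDr nu2 (Z - W + (W - Y2))) (edotDr nu2 (Z - W)).
  have := o2 _ DW; have := unit_dot (Z - W) n2.
  have := unit_dot ((Y2 - Y1) + (Y1 - Z0)) n2.
  have := enormD (Y2 - Y1) (Y1 - Z0); rewrite enormB in hY; lra.
Qed.

Lemma compact_enorm_bounded (A : set V) : compact A ->
  exists M, forall x, A x -> enorm x <= M.
Proof.
move=> /compact_bounded [M0 [_ HM]].
exists (n.+1%:R * (`|M0| + 1)) => x Ax.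
apply: (le_trans (enorm_le_norm x)); rewrite ler_wpM2l //.
have := HM (`|M0| + 1); apply => //.
by rewrite (le_lt_trans (ler_norm M0)) // ltrDl.
Qed.

Lemma bdry_in (D : set V) X : compact D -> bdry D X -> D X.
Proof.
move=> cD [cl _]; have cl' : closed D by exact: compact_closed.
by rewrite (closure_id D).1 //.
Qed.

Lemma edist_le (a : V) (B : set V) b : B b -> edist_set a B <= enorm (a - b).
Proof.
move=> Bb; apply: ge_inf; last by exists b.
by exists 0 => _ [y _ <-]; exact: enorm_ge0.
Qed.

Lemma hd_close (A D : set V) (rho : R) : compact A -> compact D ->
  A !=set0 -> D !=set0 -> hausdorff_dist D A < rho ->
  (forall Z, A Z -> exists2 W, D W & enorm (Z - W) <= rho) /\
  (forall Y, D Y -> exists2 Z, A Z & enorm (Y - Z) <= rho).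
Proof.
move=> cA cD [a0 Aa0] [d0 Dd0].
have [MA HMA] := compact_enorm_bounded cA.
have [MD HMD] := compact_enorm_bounded cD.
rewrite /hausdorff_dist gt_max => /andP[h1 h2].
have ex : forall (P Q : set V) x q0, Q q0 -> (forall q, Q q -> enorm q <= MA + MD) ->
    (forall p, P p -> enorm p <= MA + MD) -> P x ->
    sup [set edist_set p Q | p in P] < rho -> exists2 q, Q q & enorm (x - q) <= rho.
  move=> P Q x q0 Qq0 bQ bP Px hs.
  have ub : has_ubound [set edist_set p Q | p in P].
    exists (2 * (MA + MD)) => _ [p Pp <-].
    apply: (le_trans (edist_le p Qq0)).
    have := enormD p (- q0); rewrite enormN => h.
    have := bP _ Pp; have := bQ _ Qq0; lra.
  have : edist_set x Q < rho.
    apply: le_lt_trans hs; apply: ub_le_sup => //; by exists x.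
  move=> /inf_lt [|_ [q Qq <-] hq]; first by exists (enorm (x - q0)), q0.
  by exists q => //; exact: ltW.
have bA : forall q, A q -> enorm q <= MA + MD.
  move=> q /HMA; have := HMD _ Dd0; have := enorm_ge0 d0; lra.
have bD : forall q, D q -> enorm q <= MA + MD.
  move=> q /HMD; have := HMA _ Aa0; have := enorm_ge0 a0; lra.
split.
- move=> Z AZ; exact: (ex A D Z d0 Dd0 bD bA AZ h2).
- move=> Y DY; exact: (ex D A Y a0 Aa0 bA bD DY h1).
Qed.

Lemma finite_min (Q : nat -> R -> Prop) :
  (forall k r r', 0 < r' -> r' <= r -> Q k r -> Q k r') ->
  (forall k, exists2 r, 0 < r & Q k r) ->
  forall K, exists2 r, 0 < r & forall k, (k < K)%N -> Q k r.
Proof.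
move=> mono ex; elim=> [|K [r r0 Hr]]; first by exists 1.
have [rK rK0 HrK] := ex K.
exists (Num.min r rK); first by rewrite lt_min r0 rK0.
move=> k; rewrite ltnS leq_eqVlt => /orP[/eqP ->|kK].
  by apply: (mono _ rK) => //; [rewrite lt_min r0 rK0 | rewrite ge_min lexx orbT].
by apply: (mono _ r) => //; [rewrite lt_min r0 rK0 | rewrite ge_min lexx | exact: Hr].
Qed.

Lemma smooth_C1 (D : set V) : smooth_boundary D -> C1_boundary D.
Proof.
move=> sD X bX; have [U [F [oU UX cF nz DU]]] := sD X bX.
exists U, F; split => //; split.
- by have [] := cF [::] 0.
- move=> v; split; first by have [] := cF [::] v.
  by have [] := cF [:: v] 0.
Qed.

Lemma omega_le (D : set V) r eps : 0 <= eps ->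
  (forall Y1 Y2 nu1 nu2, bdry D Y1 -> bdry D Y2 -> enorm (Y1 - Y2) < r ->
     outward_unit_normal D Y1 nu1 -> outward_unit_normal D Y2 nu2 ->
     enorm (nu1 - nu2) <= eps) ->
  omega D r <= eps.
Proof.
move=> eps0 H; rewrite /omega.
have [ne|nne] := pselect ([set d | exists X1 X2 nu1 nu2,
        [/\ bdry D X1 /\ bdry D X2, enorm (X1 - X2) < r,
            outward_unit_normal D X1 nu1, outward_unit_normal D X2 nu2 &
            d = enorm (nu1 - nu2)]] !=set0).
  apply: ge_sup => // _ [X1 [X2 [nu1 [nu2 [[b1 b2] hr o1 o2 ->]]]]].
  exact: (H _ _ _ _ b1 b2 hr o1 o2).
by rewrite sup_out // => -[ne _]; exact: nne ne.
Qed.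

End Final.

Unset Implicit Arguments.

Theorem lemma5p4 (R : realType) (n : nat)
  (Om : set 'rV[R]_n.+1) (Omk : nat -> set 'rV[R]_n.+1) :
  convex_body Om -> C1_boundary Om ->
  (forall k, [/\ convex_body (Omk k), smooth_boundary (Omk k)
                & uniformly_convex (Omk k)]) ->
  (fun k => hausdorff_dist (Omk k) Om) @ \oo --> (0 : R) ->
  forall Theta : R, 0 < Theta < 1 ->
  exists r : R, 0 < r /\
    forall k : nat,
      Num.max (omega Om r) (omega (Omk k) r) < Num.sqrt (2 - 2 * Theta).
Proof.
move=> [cOm [cvx [y0 iOm]]] C1Om Hk hd Theta /andP[T0 T1].
have Om0 : Om !=set0 by exists y0; exact: nbhs_singleton.
have Hk' : forall k, compact (Omk k) /\ C1_boundary (Omk k) /\ Omk k !=set0.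
  move=> k; have [[ck [cvk [x ix]]] sk uk] := Hk k.
  by split => //; split; [exact: smooth_C1 | exists x; exact: nbhs_singleton].
set S := Num.sqrt (2 - 2 * Theta).
have S0 : 0 < S by rewrite sqrtr_gt0; lra.
set eps := S / 2.
have eps0 : 0 < eps by rewrite divr_gt0.
have [d d0 Hd] := uniform_normals cOm C1Om eps0.
set rho := d / 4.
have rho0 : 0 < rho by rewrite divr_gt0.
have : \forall k \near \oo, hausdorff_dist (Omk k) Om < rho.
  move/cvgrPdist_lt: hd => /(_ rho rho0); apply: filterS => k.
  by rewrite sub0r normrN; apply: le_lt_trans; exact: ler_norm.
move=> [K _ HK].
pose Q k r := forall Y1 Y2 nu1 nu2, bdry (Omk k) Y1 -> bdry (Omk k) Y2 ->
     enorm (Y1 - Y2) < r ->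
     outward_unit_normal (Omk k) Y1 nu1 -> outward_unit_normal (Omk k) Y2 nu2 ->
     enorm (nu1 - nu2) <= eps.
have mono : forall k r r', 0 < r' -> r' <= r -> Q k r -> Q k r'.
  move=> k r r' _ rr' HQ Y1 Y2 nu1 nu2 b1 b2 hY; apply: HQ => //.
  exact: lt_le_trans hY rr'.
have exQ : forall k, exists2 r, 0 < r & Q k r.
  move=> k; have [ck [C1k nek]] := Hk' k.
  have [dk dk0 Hdk] := uniform_normals ck C1k eps0.
  exists dk => // Y1 Y2 nu1 nu2 b1 b2 hY.
  apply: (transfer Hdk _ _ (lexx 0) (ltW dk0)).
  - by move=> Z AZ; exists Z => //; rewrite subrr /enorm edot0r sqrtr0.
  - by move=> Z AZ; exists Z => //; rewrite subrr /enorm edot0r sqrtr0.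
  - by rewrite mulr0 add0r.
  - exact: bdry_in b1.
  - exact: bdry_in b2.
  - exact: ltW.
have [r1 r10 Hr1] := finite_min mono exQ K.
exists (Num.min rho (Num.min r1 d)); split.
  by rewrite !lt_min rho0 r10 d0.
move=> k.
have epsS : eps < S by rewrite /eps ltr_pdivrMr //; lra.
rewrite gt_max; apply/andP; split.
- apply: le_lt_trans epsS; apply: omega_le; first exact: ltW.
  move=> Y1 Y2 nu1 nu2 b1 b2 hY.
  apply: (transfer Hd _ _ (lexx 0) (ltW d0)).
  + by move=> Z AZ; exists Z => //; rewrite subrr /enorm edot0r sqrtr0.
  + by move=> Z AZ; exists Z => //; rewrite subrr /enorm edot0r sqrtr0.
  + by rewrite mulr0 add0r.
  + exact: bdry_in b1.
  + exact: bdry_in b2.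
  + apply: ltW; apply: (lt_le_trans hY); rewrite !ge_min lexx !orbT //.
- apply: le_lt_trans epsS; apply: omega_le; first exact: ltW.
  have [kK|Kk] := ltnP k K.
    apply: (mono _ r1) => //; first by rewrite !lt_min rho0 r10 d0.
      by rewrite !ge_min lexx !orbT.
    exact: Hr1.
  move=> Y1 Y2 nu1 nu2 b1 b2 hY.
  have [ck [C1k nek]] := Hk' k.
  have [h1 h2] := hd_close cOm ck Om0 nek (HK k Kk).
  apply: (transfer Hd h1 h2 (ltW rho0) (ltW rho0)).
  + by rewrite /rho; lra.
  + exact: bdry_in b1.
  + exact: bdry_in b2.
  + apply: ltW; apply: (lt_le_trans hY); rewrite !ge_min lexx //.
Qed.
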